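(* Let $m,n\ge1$ and $\rho\in\mathfrak D(\mathcal H^{(m)}\otimes\mathcal H^{(n)})$. Then $$\mathtt p\big(\mathtt{AND}^{(m,n)}(\rho)\big)\le \mathtt p\big(Red^{(1)}_{[m,n]}(\rho)\big)\quad\text{and}\quad \mathtt p\big(\mathtt{AND}^{(m,n)}(\rho)\big)\le \mathtt p\big(Red^{(2)}_{[m,n]}(\rho)\big).$$
   Context: For $n\ge1$, $\mathcal H^{(n)}=(\mathbb C^2)^{\otimes n}$ with canonical basis $|x_1,\dots,x_n\rangle$, $x_i\in\{0,1\}$, $|0\rangle=(1,0)$, $|1\rangle=(0,1)$; $\mathcal H^{(m)}\otimes\mathcal H^{(n)}=\mathcal H^{(m+n)}$. $\mathfrak D(\mathcal H^{(n)})$ is the set of density operators on $\mathcal H^{(n)}$. $P_1^{(n)}$ (resp. $P_0^{(n)}$) is the projection onto the span of canonical basis vectors with last bit $x_n=1$ (resp. $0$), and $\mathtt p(\rho)=\mathrm{tr}(P_1^{(n)}\rho)$ for $\rho\in\mathfrak D(\mathcal H^{(n)})$. $Red^{(1)}_{[m,n]}(\rho)$ and $Red^{(2)}_{[m,n]}(\rho)$ are the reduced states (partial traces) of $\rho$ on the first factor $\mathcal H^{(m)}$ and on the second factor $\mathcal H^{(n)}$ respectively. The Toffoli gate $\mathtt T^{(m,n,1)}$ on $\mathcal H^{(m+n+1)}$ acts by $|x_1,\dots,x_m,y_1,\dots,y_n,z\rangle\mapsto|x_1,\dots,x_m,y_1,\dots,y_n\rangle\otimes|x_my_n\oplus z\rangle$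 ($\oplus$ = addition mod 2), and $\mathtt{AND}^{(m,n)}(\rho)=\mathtt T^{(m,n,1)}(\rho\otimes P_0^{(1)})\mathtt T^{(m,n,1)\dagger}$. *)

(* Defs.v *)
(* Qubit registers H^(n) = (C^2)^{(x)n} represented by
   matrices 'M[C]_(2^n), over an arbitrary numeric closed field C
   (the complex numbers being the intended instance). *)
From HB Require Import structures.
From mathcomp Require Import all_boot all_order all_algebra.
Set Implicit Arguments. Unset Strict Implicit. Unset Printing Implicit Defensive.
Import Order.TTheory GRing.Theory Num.Theory.
Local Open Scope ring_scope.

(* Canonical basis index convention: |x_1,...,x_N> <-> k = sum_i x_i 2^(N-i),
   so the last bit x_N is k %% 2, and H^(m) (x) H^(n) = H^(m+n) via
   |i> (x) |j> <-> |i * 2^n + j> (Kronecker ordering). *)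

(* the natural number k viewed as an index of 'I_(2^N) (exact for k < 2^N) *)
Definition bidx (N k : nat) : 'I_(2 ^ N) :=
  Ordinal (ltn_pmod k (expn_gt0 2 N)).

Definition adjmx (C : numClosedFieldType) (p q : nat) (A : 'M[C]_(p, q))
  : 'M[C]_(q, p) := (map_mx Num.conj A)^T.

Definition psdmx (C : numClosedFieldType) (N : nat) (A : 'M[C]_N) : Prop :=
  forall u : 'cV[C]_N, 0 <= (adjmx u *m A *m u) 0 0.

Definition density (C : numClosedFieldType) (N : nat) (rho : 'M[C]_(2 ^ N))
  : Prop := psdmx rho /\ \tr rho = 1.

Definition P1 (C : numClosedFieldType) (N : nat) : 'M[C]_(2 ^ N) :=
  \matrix_(k, l) ((k == l) && odd k)%:R.
Definition P0 (C : numClosedFieldType) (N : nat) : 'M[C]_(2 ^ N) :=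
  \matrix_(k, l) ((k == l) && ~~ odd k)%:R.

Definition prob1 (C : numClosedFieldType) (N : nat) (rho : 'M[C]_(2 ^ N)) : C :=
  \tr (P1 C N *m rho).

Definition tensmx (C : numClosedFieldType) (m n : nat)
  (A : 'M[C]_(2 ^ m)) (B : 'M[C]_(2 ^ n)) : 'M[C]_(2 ^ (m + n)) :=
  \matrix_(k, l) (A (bidx m (k %/ 2 ^ n)%N) (bidx m (l %/ 2 ^ n)%N)
                  * B (bidx n k) (bidx n l)).

Definition Red1 (C : numClosedFieldType) (m n : nat) (rho : 'M[C]_(2 ^ (m + n)))
  : 'M[C]_(2 ^ m) :=
  \matrix_(i, i') \sum_(j < 2 ^ n)
     rho (bidx (m + n) (i * 2 ^ n + j)%N) (bidx (m + n) (i' * 2 ^ n + j)%N).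
Definition Red2 (C : numClosedFieldType) (m n : nat) (rho : 'M[C]_(2 ^ (m + n)))
  : 'M[C]_(2 ^ n) :=
  \matrix_(j, j') \sum_(i < 2 ^ m)
     rho (bidx (m + n) (i * 2 ^ n + j)%N) (bidx (m + n) (i * 2 ^ n + j')%N).

(* Toffoli gate on H^(m+n+1): |x_1..x_m, y_1..y_n, z> |-> |x, y, x_m y_n (+) z>.
   Index k = a * 2 + z with a = i * 2^n + j; x_m = odd i, y_n = odd j. *)
Definition toff_idx (n k : nat) : nat :=
  let a := (k %/ 2)%N in
  let z := odd k in
  (a * 2 + (z (+) (odd (a %/ 2 ^ n)%N && odd a)))%N.

Definition toffoli (C : numClosedFieldType) (m n : nat) : 'M[C]_(2 ^ (m + n + 1)) :=
  \matrix_(k, l) (k == toff_idx n l :> nat)%:R.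

Definition ANDgate (C : numClosedFieldType) (m n : nat) (rho : 'M[C]_(2 ^ (m + n)))
  : 'M[C]_(2 ^ (m + n + 1)) :=
  toffoli C m n *m tensmx rho (P0 C 1) *m adjmx (toffoli C m n).

(* Main.v *)
Require Import Defs.
From mathcomp Require Import all_boot all_order all_algebra.
Set Implicit Arguments. Unset Strict Implicit. Unset Printing Implicit Defensive.
Import Order.TTheory GRing.Theory Num.Theory.
Local Open Scope ring_scope.

Lemma sum_nat_mul (C : nmodType) (p q : nat) (F : nat -> C) :
  \sum_(0 <= a < p * q) F a = \sum_(0 <= i < p) \sum_(0 <= j < q) F (i * q + j)%N.
Proof.
elim: p => [|p IH]; first by rewrite mul0n !big_geq.
rewrite big_nat_recr //= mulSnr (big_cat_nat _ (leq_addr q (p * q))) //= IH.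
congr (_ + _).
rewrite -{1}[(p * q)%N]add0n big_addn addnC addnK.
by apply: eq_bigr => j _; rewrite addnC.
Qed.

Lemma bidx_val N (k : 'I_(2 ^ N)) : bidx N k = k.
Proof. by apply: val_inj; rewrite /= modn_small. Qed.

Lemma sum_ord_nat (C : nmodType) N (F : nat -> C) :
  \sum_(k < 2 ^ N) F k = \sum_(0 <= k < 2 ^ N) F k.
Proof. by rewrite big_mkord. Qed.

Lemma prob1_diag (C : numClosedFieldType) N (X : 'M[C]_(2 ^ N)) :
  prob1 X = \sum_(k < 2 ^ N) (odd k)%:R * X k k.
Proof.
rewrite /prob1 /mxtrace; apply: eq_bigr => k _; rewrite mxE (bigD1 k) //=.
rewrite big1 ?addr0; first by rewrite mxE eqxx.
by move=> j /negbTE hj; rewrite mxE eq_sym hj mul0r.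
Qed.

Lemma diag_ge0 (C : numClosedFieldType) N (rho : 'M[C]_N) :
  psdmx rho -> forall a, 0 <= rho a a.
Proof.
move=> h a; have := h (delta_mx a 0).
have -> : adjmx (delta_mx a 0 : 'cV[C]_N) = delta_mx 0 a.
  apply/matrixP => i j; rewrite /adjmx !mxE conjC_nat.
  by rewrite andbC.
by rewrite -rowE -colE !mxE.
Qed.
Lemma toff_invol n k : toff_idx n (toff_idx n k) = k.
Proof.
rewrite /toff_idx.
set b := (_ (+) _).
have h1 : ((k %/ 2 * 2 + b) %/ 2 = k %/ 2)%N.
  have hb : (b < 2)%N by case: (b).
  by rewrite divnMDl // (divn_small hb) addn0.
have h2 : odd (k %/ 2 * 2 + b) = b by rewrite oddD oddM andbF /= oddb.
rewrite h1 h2 /b -addbA addbb addbF {3}(divn_eq k 2) modn2.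
by [].
Qed.

Lemma toff_lt n N k : (k < 2 ^ (N + 1))%N -> (toff_idx n k < 2 ^ (N + 1))%N.
Proof.
rewrite addn1.
move=> hk; rewrite /toff_idx expnSr.
have : (k %/ 2 < 2 ^ N)%N by rewrite ltn_divLR // -expnSr.
set b := (_ (+) _); move=> h.
have hb : (b < 2)%N by case: (b).
by rewrite -ltn_divLR // divnMDl // (divn_small hb) addn0.
Qed.

Section AND.
Variables (C : numClosedFieldType) (m n : nat).
Let N := (m + n + 1)%N.

Definition tord (k : 'I_(2 ^ N)) : 'I_(2 ^ N) :=
  Ordinal (@toff_lt n (m + n) k (ltn_ord k)).

Lemma tord_invol : involutive tord.
Proof. by move=> k; apply: val_inj; rewrite /= toff_invol. Qed.

Lemma eq_toff (k l : 'I_(2 ^ N)) : (k == toff_idx n l :> nat) = (l == tord k).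
Proof.
apply/eqP/eqP => [h|->]; last by rewrite /= toff_invol.
by apply: val_inj; rewrite /= h toff_invol.
Qed.

Lemma sum_toff (k : 'I_(2 ^ N)) (f : 'I_(2 ^ N) -> C) :
  \sum_(l : 'I_(2 ^ N)) f l * (k == toff_idx n l :> nat)%:R = f (tord k).
Proof.
rewrite (bigD1 (tord k)) // eq_toff eqxx mulr1 big1; first exact: addr0.
by move=> l /negbTE hl; rewrite eq_toff hl mulr0.
Qed.

Lemma sum_toff' (k : 'I_(2 ^ N)) (f : 'I_(2 ^ N) -> C) :
  \sum_(l : 'I_(2 ^ N)) (k == toff_idx n l :> nat)%:R * f l = f (tord k).
Proof.
rewrite -(sum_toff k f); apply: eq_bigr => l _; exact: mulrC.
Qed.

Lemma conj_toff (X : 'M[C]_(2 ^ N)) (k : 'I_(2 ^ N)) :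
  (toffoli C m n *m X *m adjmx (toffoli C m n)) k k = X (tord k) (tord k).
Proof.
rewrite mxE.
under eq_bigr => l _ do rewrite /adjmx !mxE conjC_nat.
rewrite sum_toff.
under eq_bigr => l _ do rewrite mxE.
by rewrite sum_toff'.
Qed.

End AND.
Section Main.
Variables (C : numClosedFieldType) (m n : nat) (rho : 'M[C]_(2 ^ (m + n))).
Let r (a : nat) := rho (bidx (m + n) a) (bidx (m + n) a).

Lemma prob1_AND : prob1 (ANDgate rho) =
  \sum_(0 <= a < 2 ^ (m + n)) (odd (a %/ 2 ^ n) && odd a)%:R * r a.
Proof.
transitivity (\sum_(0 <= k < 2 ^ (m + n + 1))
   (odd (toff_idx n k))%:R * (r (k %/ 2) * (~~ odd k)%:R)).
  rewrite prob1_diag /ANDgate (reindex_inj (inv_inj (@tord_invol m n))) /=.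
  rewrite big_mkord; apply: eq_bigr => k _.
  rewrite conj_toff tord_invol !mxE /=.
  by rewrite eqxx expn1 modn2 oddb andTb /r; reflexivity.
rewrite expnD expn1 (@sum_nat_mul _ (2 ^ (m + n)) 2); apply: eq_big_nat => a ha.
rewrite big_ltn // big_nat1 !addn0.
rewrite oddD !oddM !andbF /= !mulr0 addr0 mulr1 mulnK //.
rewrite /toff_idx mulnK // oddM andbF /= oddD oddM andbF /= oddb.
reflexivity.
Qed.

Lemma prob1_Red1 : prob1 (Red1 rho) =
  \sum_(0 <= a < 2 ^ (m + n)) (odd (a %/ 2 ^ n))%:R * r a.
Proof.
rewrite prob1_diag expnD (@sum_nat_mul _ (2 ^ m) (2 ^ n)) big_mkord.
apply: eq_bigr => i _.
rewrite mxE big_mkord mulr_sumr; apply: eq_bigr => j _.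
by rewrite divnMDl ?expn_gt0 // (divn_small (ltn_ord j)) addn0.
Qed.

Lemma prob1_Red2 (hn : (1 <= n)%N) : prob1 (Red2 rho) =
  \sum_(0 <= a < 2 ^ (m + n)) (odd a)%:R * r a.
Proof.
rewrite prob1_diag expnD (@sum_nat_mul _ (2 ^ m) (2 ^ n)) exchange_big_nat /= big_mkord.
apply: eq_bigr => j _.
rewrite mxE big_mkord mulr_sumr; apply: eq_bigr => i _.
rewrite oddD oddM oddX /=.
have -> : (n == 0%N) = false by case: (n) hn.
by rewrite orbF andbF.
Qed.
Lemma r_ge0 (hrho : density rho) a : 0 <= r a.
Proof. rewrite /r; exact: (diag_ge0 hrho.1). Qed.

End Main.

Theorem theorem3p10 (C : numClosedFieldType) (m n : nat) (hm : (1 <= m)%N) (hn : (1 <= n)%N)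
  (rho : 'M[C]_(2 ^ (m + n))) (hrho : density rho) :
  prob1 (ANDgate rho) <= prob1 (Red1 rho) /\ prob1 (ANDgate rho) <= prob1 (Red2 rho).
Proof.
rewrite prob1_AND prob1_Red1 prob1_Red2 //; split; apply: ler_sum => a _;
  apply: ler_wpM2r; try exact: r_ge0; rewrite ler_nat;
  by case: (odd _); case: (odd _).
Qed.
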